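(* Let $r,c\ge3$, $n=rc$, let $\mathcal{M}\subseteq\{1,\dots,n\}$ be a set of sampled pixels (vectorized indexing), $A=\mathbf{I}_{\mathcal{M}}$, $\varepsilon>0$, and $y\in\mathbb{R}^{|\mathcal{M}|}$ (indexed by $\mathcal{M}$). Let $Z\in\mathbb{R}^{r\times c}$, $z=\mathrm{vec}(Z)$, be feasible for $\min_{z'}\|\Delta z'\|_1$ subject to $\|Az'-y\|_\infty\le\varepsilon$. With $\mathcal{A}=\{i\in\mathcal{M}:|y_i-z_i|=\varepsilon\}$, $\mathcal{A}_\uparrow=\{i\in\mathcal{M}: y_i-z_i=\varepsilon\}$, $\mathcal{A}_\downarrow=\{i\in\mathcal{M}: y_i-z_i=-\varepsilon\}$ and $\bar{\mathcal{A}}=\mathcal{M}\setminus\mathcal{A}$, $Z$ is a minimizer if and only if there exists $u\in\mathbb{R}^{2(n-r-c)}$ such that $$(\Delta^{\mathsf{T}})_{\overline{\mathcal{M}}\cup\bar{\mathcal{A}}}\,u=\mathbf{0},\quad u_{\mathcal{I}}=\mathrm{sign}(\Delta z)_{\mathcal{I}},\quad \|u\|_\infty\le1,\quad (\Delta^{\mathsf{T}})_{\mathcal{A}_\uparrow}u\ge\mathbf{0},\quad (\Delta^{\mathsf{T}})_{\mathcal{A}_\downarrow}u\le\mathbf{0},$$ where $\mathcal{I}$ is the set of indices of nonzero entries of $\Delta z$ and $\overline{\mathcal{M}}=\{1,\dots,n\}\setminus\mathcal{M}$.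
   Context: $\mathrm{vec}$ stacks columns (pixel $(i,j)\mapsto$ index $(j-1)r+i$). For $p\ge3$, $D^{(p)}\in\mathbb{R}^{(p-2)\times p}$ is the second-order difference operator with $k$-th row having entries $1,-2,1$ in columns $k,k+1,k+2$; $D_V=D^{(r)}$, $D_H=D^{(c)}$, $\Delta=\begin{bmatrix}\mathbf{I}_c\otimes D_V\\ D_H\otimes\mathbf{I}_r\end{bmatrix}\in\mathbb{R}^{2(n-r-c)\times n}$. $\mathbf{I}_{\mathcal{M}}$ consists of the rows of the identity indexed by $\mathcal{M}$; $M_{\mathcal{S}}$ denotes rows of $M$ indexed by $\mathcal{S}$, $v_{\mathcal{S}}$ the subvector; $\mathrm{sign}$ is entrywise with $\mathrm{sign}(0)=0$; inequalities are entrywise. *)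

(* Defs.v *)
From HB Require Import structures.
From mathcomp Require Import all_boot all_order all_algebra.
From mathcomp Require Import reals.
Set Implicit Arguments. Unset Strict Implicit. Unset Printing Implicit Defensive.
Import Order.TTheory GRing.Theory Num.Theory.
Local Open Scope ring_scope.

Lemma idx_pos (m p : nat) (k : 'I_(m * p)) : (0 < p)%N.
Proof. case: p k => [|p] [k Hk] //; by rewrite muln0 in Hk. Qed.

Lemma idx_hi_lt (m p : nat) (k : 'I_(m * p)) : (k %/ p < m)%N.
Proof. by rewrite ltn_divLR ?(idx_pos k) // ltn_ord. Qed.

Lemma idx_lo_lt (m p : nat) (k : 'I_(m * p)) : (k %% p < p)%N.
Proof. by rewrite ltn_mod (idx_pos k). Qed.

Definition idx_hi (m p : nat) (k : 'I_(m * p)) : 'I_m := Ordinal (idx_hi_lt k).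
Definition idx_lo (m p : nat) (k : 'I_(m * p)) : 'I_p := Ordinal (idx_lo_lt k).

(* Kronecker product: (A ⊗ B)[(i1*p+i2),(j1*q+j2)] = A[i1,j1] * B[i2,j2]. *)
Definition kron (R : nzRingType) (m n p q : nat)
  (A : 'M[R]_(m, n)) (B : 'M[R]_(p, q)) : 'M[R]_(m * p, n * q) :=
  \matrix_(k, l) (A (idx_hi k) (idx_hi l) * B (idx_lo k) (idx_lo l)).

(* Column-stacking vectorisation: pixel (i,j) |-> index j*r + i (0-based). *)
Definition vecc (R : nzRingType) (r c : nat) (Z : 'M[R]_(r, c)) : 'cV[R]_(c * r) :=
  \col_k Z (idx_lo k) (idx_hi k).

Definition D2 (R : nzRingType) (p : nat) : 'M[R]_(p - 2, p) :=
  \matrix_(k, j) (if (j == k :> nat) then 1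
                  else if (j == k.+1 :> nat) then -2
                  else if (j == k.+2 :> nat) then 1 else 0).

(* Delta = [ I_c ⊗ D_V ; D_H ⊗ I_r ],  of size 2(n-r-c) x n with n = r c. *)
Definition Delta (R : nzRingType) (r c : nat) :
  'M[R]_(c * (r - 2) + (c - 2) * r, c * r) :=
  col_mx (kron (1%:M : 'M[R]_c) (D2 R r)) (kron (D2 R c) (1%:M : 'M[R]_r)).

Definition l1norm (R : numDomainType) (m : nat) (v : 'cV[R]_m) : R :=
  \sum_k `|v k 0|.

(* Feasibility: || I_M z - y ||_inf <= eps  (y only read on M). *)
Definition feasible (R : numDomainType) (n : nat) (M : {set 'I_n})
  (y : 'cV[R]_n) (eps : R) (z : 'cV[R]_n) : Prop :=
  forall i, i \in M -> `|z i 0 - y i 0| <= eps.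

(* Main.v *)
Require Import Defs.
From HB Require Import structures.
From mathcomp Require Import all_boot all_order all_algebra.
From mathcomp Require Import reals.
From mathcomp Require Import ring lra.
Import Order.TTheory GRing.Theory Num.Theory.
Local Open Scope ring_scope.
Set Implicit Arguments. Unset Strict Implicit.
Section Farkas.
Variables (R : realFieldType) (N : nat).
Notation vec := 'rV[R]_N.

Definition dot (m : nat) (a x : vec) : R := \sum_(i < N | (i < m)%N) a 0 i * x 0 i.
Definition feas (m : nat) (C : seq (vec * R)) (x : vec) : Prop :=
  forall c, c \in C -> dot m c.1 x <= c.2.

Inductive cone (C : seq (vec * R)) : vec -> R -> Prop :=
| cone0 : cone C 0 0
| coneIn c : c \in C -> cone C c.1 c.2
| coneD a b a' b' : cone C a b -> cone C a' b' -> cone C (a + a') (b + b')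
| coneZ k a b : 0 <= k -> cone C a b -> cone C (k *: a) (k * b).

Lemma cone_sub C C' : (forall c, c \in C' -> cone C c.1 c.2) ->
  forall a b, cone C' a b -> cone C a b.
Proof.
move=> H a b; elim=> [|c /H //|? ? ? ? _ ? _ ?|? ? ? ? _ ?].
- exact: cone0.
- exact: coneD.
- exact: coneZ.
Qed.

Lemma dotDZ m k k' (a b x : vec) : dot m (k *: a + k' *: b) x = k * dot m a x + k' * dot m b x.
Proof.
rewrite /dot !mulr_sumr -big_split /=; apply: eq_bigr => i _; rewrite !mxE; ring.
Qed.

Lemma interval (Ls Us : seq R) : (forall l u, l \in Ls -> u \in Us -> l <= u) ->
  exists t, (forall l, l \in Ls -> l <= t) /\ (forall u, u \in Us -> t <= u).
Proof.
elim: Ls => [|l Ls IH] H.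
  elim: Us {H} => [|u Us [t [_ Ht]]]; first by exists 0.
  exists (Num.min u t); split=> // v; rewrite inE => /orP[/eqP->|/Ht]; first by rewrite ge_min lexx.
  by move=> h; rewrite ge_min h orbT.
have [|t [H1 H2]] := IH.
  by move=> l' u hl hu; apply: H => //; rewrite inE hl orbT.
exists (Num.max l t); split.
  by move=> v; rewrite inE => /orP[/eqP->|/H1 h]; rewrite le_max ?lexx // h orbT.
move=> u hu; rewrite ge_max H2 // andbT; apply: H => //; by rewrite inE eqxx.
Qed.

Definition comb (j : 'I_N) (p n : vec * R) : vec * R :=
  ((- n.1 0 j) *: p.1 + p.1 0 j *: n.1, (- n.1 0 j) * p.2 + p.1 0 j * n.2).

Lemma farkas m : (m <= N)%N -> forall C,
  (exists x, feas m C x) \/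
  (exists a b, cone C a b /\ (forall i : 'I_N, (i < m)%N -> a 0 i = 0) /\ b < 0).
Proof.
elim: m => [|m IH] hm C.
  have dot0 a x : dot 0 a x = 0 by rewrite /dot big_pred0.
  case: (boolP (all (fun c : vec * R => 0 <= c.2) C)) => [/allP h|].
    by left; exists 0 => c /h; rewrite dot0.
  rewrite -has_predC => /hasP [c cC]; rewrite /= -ltNge => hc.
  by right; exists c.1, c.2; split; [exact: coneIn|split].
pose j := Ordinal hm.
pose P := [seq c <- C | 0 < (c.1 : vec) 0 j].
pose Nn := [seq c <- C | (c.1 : vec) 0 j < 0].
pose Z := [seq c <- C | (c.1 : vec) 0 j == 0].
pose C' := Z ++ [seq comb j p n | p <- P, n <- Nn].
have hC' c : c \in C' -> (cone C c.1 c.2 /\ c.1 0 j = 0).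
  rewrite mem_cat => /orP [|/allpairsP [[p n] [/=]]].
    by rewrite mem_filter => /andP [/eqP h1 h2]; split => //; exact: coneIn.
  rewrite !mem_filter => /andP [hp pC] /andP [hn nC] ->; split.
    apply: coneD; apply: coneZ; try exact: coneIn.
      by rewrite oppr_ge0 ltW.
    exact: ltW.
  by rewrite /= !mxE; ring.
have dotS a x : dot m.+1 a x = dot m a x + a 0 j * x 0 j.
  rewrite /dot (bigD1 j) //= addrC; congr (_ + _); apply: eq_bigl => i.
  by rewrite -val_eqE /= ltnS [RHS]ltn_neqAle andbC.
case: (IH (ltnW hm) C') => [[x' hx']|[a [b [ha [hz hb]]]]]; last first.
  right; exists a, b; split; first by apply: cone_sub ha => c /hC' [].
  split => // i; rewrite ltnS leq_eqVlt => /orP [/eqP hi|/hz //].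
  have -> : i = j by apply: val_inj.
  elim: ha {hz hb} => [|c /hC' [] //|? ? ? ? _ h1 _ h2|? ? ? ? _ h]; rewrite !mxE ?h1 ?h2 ?h; ring.
pose Ls := [seq (n.2 - dot m n.1 x') / n.1 0 j | n <- Nn].
pose Us := [seq (p.2 - dot m p.1 x') / p.1 0 j | p <- P].
have [|t [ht1 ht2]] := interval (Ls := Ls) (Us := Us).
  move=> l u /mapP [n nN ->] /mapP [p pP ->].
  move: nN pP; rewrite !mem_filter => /andP [hn nC] /andP [hp pC].
  have /hx' : comb j p n \in C'.
    by rewrite mem_cat; apply/orP; right; apply/allpairsP; exists (p, n); rewrite /= !mem_filter hp pC hn nC.
  rewrite /= dotDZ => h.
  rewrite ler_pdivlMr // mulrAC ler_ndivrMr //.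
  nra.
left; exists (\row_i (if i == j then t else x' 0 i)).
have dx a : dot m a (\row_i (if i == j then t else x' 0 i)) = dot m a x'.
  rewrite /dot; apply: eq_bigr => i hi; rewrite mxE; case: eqP => // e.
  by move: hi; rewrite e /= ltnn.
move=> c cC; rewrite dotS dx mxE eqxx.
case: (ltrgtP (c.1 0 j) 0) => hc.
- have : (c.2 - dot m c.1 x') / c.1 0 j <= t by apply: ht1; apply/mapP; exists c => //; rewrite mem_filter hc.
  rewrite ler_ndivrMr //; lra.
- have : t <= (c.2 - dot m c.1 x') / c.1 0 j by apply: ht2; apply/mapP; exists c => //; rewrite mem_filter hc.
  rewrite ler_pdivlMr //; lra.
- rewrite hc mul0r addr0; apply: hx'; by rewrite mem_cat mem_filter hc eqxx cC.
Qed.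

End Farkas.

Section Aux.
Variable R : realFieldType.

Lemma dual_sum m n (A : 'M[R]_(m, n)) (u : 'cV[R]_m) (x : 'cV[R]_n) :
  \sum_k u k 0 * (A *m x) k 0 = \sum_i (A^T *m u) i 0 * x i 0.
Proof.
under eq_bigr do rewrite mxE big_distrr /=.
rewrite exchange_big /=; apply: eq_bigr => i _.
rewrite mxE big_distrl /=; apply: eq_bigr => k _; rewrite mxE; ring.
Qed.

Lemma sign_stable (a q t : R) : a != 0 -> 0 <= t -> t * `|q| <= `|a| ->
  `|a + t * q| = Num.sg a * (a + t * q).
Proof.
move=> a0 t0 h.
have hq : - (t * `|q|) <= t * q <= t * `|q|.
  rewrite -ler_norml normrM ger0_norm //.
case/andP: hq => hq1 hq2.
case: (ltrgtP a 0) => ha; last by move: a0; rewrite ha eqxx.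
- have h' : a + t * q <= 0 by rewrite (ltr0_norm ha) in h; lra.
  by rewrite ltr0_sg // mulN1r ler0_norm.
- have h' : 0 <= a + t * q by rewrite (gtr0_norm ha) in h; lra.
  by rewrite gtr0_sg // mul1r ger0_norm.
Qed.

Lemma small_mul (q s : R) : 0 < s -> exists2 d, 0 < d & forall t, 0 < t <= d -> t * `|q| <= s.
Proof.
move=> s0; have q1 : 0 < `|q| + 1 by rewrite ltr_pwDr.
exists (s / (`|q| + 1)); first by rewrite divr_gt0.
move=> t /andP [t0 td].
have : t * (`|q| + 1) <= s by rewrite -ler_pdivlMr.
have : 0 <= t by exact: ltW.
nra.
Qed.

Lemma small_seq (T : eqType) (s : seq T) (P : T -> R -> Prop) :
  (forall i, i \in s -> exists2 d, 0 < d & forall t, 0 < t <= d -> P i t) ->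
  exists2 d, 0 < d & forall t, 0 < t <= d -> forall i, i \in s -> P i t.
Proof.
elim: s => [|x s IH] H; first by exists 1.
have [|d1 h1 H1] := IH; first by move=> i hi; apply: H; rewrite inE hi orbT.
have [|d2 h2 H2] := H x; first by rewrite inE eqxx.
exists (Num.min d1 d2); first by rewrite lt_min h1 h2.
move=> t /andP [t0 td] i; rewrite inE => /orP [/eqP ->|hi].
  by apply: H2; rewrite t0 (le_trans td) // ge_min lexx orbT.
by apply: H1 => //; rewrite t0 (le_trans td) // ge_min lexx.
Qed.

End Aux.

Section Extra.
Variables (R : realFieldType) (N : nat).
Lemma dot_full (a x : 'rV[R]_N) : dot N a x = \sum_i a 0 i * x 0 i.
Proof. by apply: eq_bigl => i; rewrite ltn_ord. Qed.
Lemma dot_opp m (a x : 'rV[R]_N) : dot m (- a) x = - dot m a x.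
Proof. by rewrite /dot -sumrN; apply: eq_bigr => i _; rewrite mxE mulNr. Qed.
Lemma dot_delta (k : 'I_N) (x : 'rV[R]_N) : dot N (delta_mx 0 k) x = x 0 k.
Proof.
rewrite dot_full (bigD1 k) //= big1 => [|k' hk']; rewrite mxE ?eqxx /= ?mul1r ?addr0 //.
by rewrite (negbTE hk') mul0r.
Qed.
End Extra.
Unset Implicit Arguments.

Theorem corollary2 (R : realType) (r c : nat) (hr : (3 <= r)%N) (hc : (3 <= c)%N)
  (M : {set 'I_(c * r)}) (eps : R) (heps : 0 < eps) (y : 'cV[R]_(c * r))
  (Z : 'M[R]_(r, c))
  (hfeas : feasible M y eps (vecc Z)) :
  let z := vecc Z in
  let Dz := Delta R r c *m z in
  (forall z' : 'cV[R]_(c * r), feasible M y eps z' ->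
     l1norm Dz <= l1norm (Delta R r c *m z'))
  <->
  (exists u : 'cV[R]_(c * (r - 2) + (c - 2) * r),
     let DTu := (Delta R r c)^T *m u in
     (* rows in  Mbar ∪ Abar : not sampled, or sampled but not active *)
     (forall i, (i \notin M) || ((i \in M) && (`|y i 0 - z i 0| != eps)) ->
        DTu i 0 = 0) /\
     (forall k, Dz k 0 != 0 -> u k 0 = Num.sg (Dz k 0)) /\
     (forall k, `|u k 0| <= 1) /\
     (forall i, i \in M -> y i 0 - z i 0 = eps -> 0 <= DTu i 0) /\
     (forall i, i \in M -> y i 0 - z i 0 = - eps -> DTu i 0 <= 0)).
Proof.
move=> z Dz.
pose Nd := (c * (r - 2) + (c - 2) * r)%N.
pose inS0 := fun i : 'I_(c*r) => (i \notin M) || ((i \in M) && (`|y i 0 - z i 0| != eps)).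
pose inL := fun i : 'I_(c*r) => (i \in M) && (y i 0 - z i 0 == eps).
pose inU := fun i : 'I_(c*r) => (i \in M) && (y i 0 - z i 0 == - eps).
have LS0 i : inL i -> inS0 i = false.
  by rewrite /inL /inS0 => /andP [-> /eqP ->]; rewrite gtr0_norm ?eqxx.
have US0 i : inU i -> inS0 i = false.
  by rewrite /inU /inS0 => /andP [-> /eqP ->]; rewrite normrN gtr0_norm ?eqxx.
have LU i : inL i -> inU i = false.
  rewrite /inL /inU => /andP [_ /eqP ->]; apply/negbTE; rewrite negb_and; apply/orP; right.
  by apply/eqP => h; move: heps; lra.
have UL i : inU i -> inL i = false.
  by move=> h; apply/negbTE/negP => /LU; rewrite h.
have cover i : i \in M -> inS0 i = false -> inL i || inU i.
  rewrite /inS0 /inL /inU => hM; rewrite hM /= => /negbFE.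
  by rewrite eqr_norml => /andP [].
split.
- move=> hopt.
  pose rowD := fun i : 'I_(c*r) => (\row_k (Delta R r c) k i : 'rV[R]_Nd).
  pose ek := fun k : 'I_Nd => (delta_mx 0 k : 'rV[R]_Nd).
  pose sgk := fun k : 'I_Nd => Num.sg (Dz k 0).
  pose C := [seq (rowD i, 0 : R) | i <- [seq i <- enum 'I_(c*r) | inS0 i || inU i]] ++
           ([seq (- rowD i, 0 : R) | i <- [seq i <- enum 'I_(c*r) | inS0 i || inL i]] ++
           ([seq (ek k, 1 : R) | k <- enum 'I_Nd] ++
           ([seq (- ek k, 1 : R) | k <- enum 'I_Nd] ++
           ([seq (ek k, sgk k) | k <- [seq k <- enum 'I_Nd | Dz k 0 != 0]] ++
            [seq (- ek k, - sgk k) | k <- [seq k <- enum 'I_Nd | Dz k 0 != 0]])))).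
  have inC1 i : inS0 i || inU i -> (rowD i, 0) \in C.
    move=> h; rewrite mem_cat; apply/orP; left.
    by apply/mapP; exists i => //; rewrite mem_filter h mem_enum.
  have inC2 i : inS0 i || inL i -> (- rowD i, 0) \in C.
    move=> h; rewrite !mem_cat; apply/orP; right; apply/orP; left.
    by apply/mapP; exists i => //; rewrite mem_filter h mem_enum.
  have inC3 k : (ek k, 1) \in C.
    rewrite !mem_cat; apply/orP; right; apply/orP; right; apply/orP; left.
    by apply/mapP; exists k => //; rewrite mem_enum.
  have inC4 k : (- ek k, 1) \in C.
    rewrite !mem_cat; apply/orP; right; apply/orP; right; apply/orP; right; apply/orP; left.
    by apply/mapP; exists k => //; rewrite mem_enum.
  have inC5 k : Dz k 0 != 0 -> (ek k, sgk k) \in C.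
    move=> h; rewrite !mem_cat; do 4! (apply/orP; right); apply/orP; left.
    by apply/mapP; exists k => //; rewrite mem_filter h mem_enum.
  have inC6 k : Dz k 0 != 0 -> (- ek k, - sgk k) \in C.
    move=> h; rewrite !mem_cat; do 5! (apply/orP; right).
    by apply/mapP; exists k => //; rewrite mem_filter h mem_enum.
  case: (farkas (leqnn Nd) C) => [[x hx]|[a [b [ha [hz hb]]]]].
  + exists x^T => DTu.
    have hDT i : DTu i 0 = dot Nd (rowD i) x.
      by rewrite /DTu dot_full mxE; apply: eq_bigr => k _; rewrite !mxE.
    have hxk k : x^T k 0 = dot Nd (ek k) x by rewrite dot_delta mxE.
    split; [|split; [|split; [|split]]].
    * move=> i hi; apply/le_anti; rewrite hDT.
      have /hx h1 := inC1 i (introT orP (or_introl hi)).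
      have /hx h2 := inC2 i (introT orP (or_introl hi)).
      by rewrite /= dot_opp oppr_le0 in h2; rewrite h1 h2.
    * move=> k hk; apply/le_anti; rewrite hxk.
      have /hx h1 := inC5 k hk.
      have /hx h2 := inC6 k hk.
      by rewrite /= dot_opp lerN2 in h2; rewrite h1 h2.
    * move=> k; rewrite ler_norml hxk.
      have /hx h1 := inC3 k.
      have /hx h2 := inC4 k.
      by rewrite /= dot_opp lerNl in h2; rewrite h1 h2.
    * move=> i hM hE; rewrite hDT.
      have /hx h2 : (- rowD i, 0) \in C.
        by apply: inC2; rewrite /inL hM hE eqxx orbT.
      by rewrite /= dot_opp oppr_le0 in h2.
    * move=> i hM hE; rewrite hDT.
      have /hx h1 : (rowD i, 0) \in C.
        by apply: inC1; rewrite /inU hM hE eqxx orbT.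
      by [].
  + exfalso.
    pose term := fun (k : 'I_Nd) (v : R) => if Dz k 0 != 0 then sgk k * v else `|v|.
    pose Phi := fun g : 'rV[R]_Nd => \sum_k term k (g 0 k).
    have Phi0 : Phi 0 = 0.
      by rewrite /Phi big1 // => k _; rewrite mxE /term; case: ifP => _; rewrite ?mulr0 ?normr0.
    have Phi1 (g : 'rV[R]_Nd) (k : 'I_Nd) : (forall k', k' != k -> g 0 k' = 0) -> Phi g = term k (g 0 k).
      move=> h; rewrite /Phi (bigD1 k) //= big1 ?addr0 // => k' hk'.
      by rewrite h // /term; case: ifP => _; rewrite ?mulr0 ?normr0.
    have PhiD (g g' : 'rV[R]_Nd) : Phi (g + g') <= Phi g + Phi g'.
      rewrite /Phi -big_split; apply: ler_sum => k _; rewrite mxE /term.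
      by case: ifP => _; [rewrite mulrDr lexx|exact: ler_normD].
    have PhiZ (k : R) (g : 'rV[R]_Nd) : 0 <= k -> Phi (k *: g) = k * Phi g.
      move=> hk; rewrite /Phi mulr_sumr; apply: eq_bigr => k' _; rewrite mxE /term.
      by case: ifP => _; [ring|rewrite normrM ger0_norm].
    have hsg (v : R) : -1 <= Num.sg v <= 1.
      by rewrite -ler_norml normr_sg; case: (v != 0); rewrite ?ler01 ?lexx.
    have inv : forall a b, cone C a b -> exists d : 'cV[R]_(c*r), exists g : 'rV[R]_Nd,
       [/\ forall i, inL i -> d i 0 <= 0, forall i, inU i -> 0 <= d i 0,
           forall k, a 0 k = (Delta R r c *m d) k 0 + g 0 k & Phi g <= b].
      move=> a0 b0; elim => [|cc hcc|a1 b1 a2 b2 _ [d1 [g1 [s1 t1 e1 p1]]] _ [d2 [g2 [s2 t2 e2 p2]]]|k a1 b1 hk _ [d1 [g1 [s1 t1 e1 p1]]]].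
      * exists 0, 0; split => [i _|i _|k|]; rewrite ?mulmx0 ?mxE ?Phi0 ?addr0 //.
      * move: hcc; rewrite !mem_cat.
        case/orP => [/mapP [i] |]. 
          rewrite mem_filter mem_enum andbT => hi -> /=.
          exists (delta_mx i 0), 0; split.
          - move=> i' hL; rewrite mxE; case: eqVneq => [e|_]; last by rewrite /= lexx.
            by subst i'; rewrite LS0 // LU // in hi.
          - by move=> i' _; rewrite mxE ler0n.
          - by move=> k; rewrite -colE !mxE addr0.
          - by rewrite Phi0.
        case/orP => [/mapP [i] |].
          rewrite mem_filter mem_enum andbT => hi -> /=.
          exists (- delta_mx i 0), 0; split.
          - by move=> i' _; rewrite !mxE oppr_le0 ler0n.
          - move=> i' hU; rewrite !mxE; case: eqVneq => [e|_]; last by rewrite /= oppr0 lexx.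
            by subst i'; rewrite US0 // UL // in hi.
          - by move=> k; rewrite mulmxN -colE !mxE addr0.
          - by rewrite Phi0.
        case/orP => [/mapP [k _ ->] /=|].
          exists 0, (ek k); split => [i _|i _|k'|]; rewrite ?mulmx0 ?mxE ?add0r ?lexx //.
          rewrite (Phi1 _ k) => [|k' hk']; last by rewrite mxE (negbTE hk') andbF.
          rewrite mxE !eqxx /term; case: ifP => _; last by rewrite normr1.
          by rewrite mulr1; case/andP: (hsg (Dz k 0)).
        case/orP => [/mapP [k _ ->] /=|].
          exists 0, (- ek k); split => [i _|i _|k'|]; rewrite ?mulmx0 ?mxE ?add0r ?lexx //.
          rewrite (Phi1 _ k) => [|k' hk']; last by rewrite !mxE (negbTE hk') andbF oppr0.
          rewrite !mxE !eqxx /term; case: ifP => _; last by rewrite normrN normr1.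
          by rewrite mulrN1 lerNl; case/andP: (hsg (Dz k 0)).
        case/orP => [/mapP [k] |/mapP [k]]; rewrite mem_filter mem_enum andbT => hk -> /=.
          exists 0, (ek k); split => [i _|i _|k'|]; rewrite ?mulmx0 ?mxE ?add0r ?lexx //.
          rewrite (Phi1 _ k) => [|k' hk']; last by rewrite mxE (negbTE hk') andbF.
          by rewrite mxE !eqxx /term hk mulr1.
        exists 0, (- ek k); split => [i _|i _|k'|]; rewrite ?mulmx0 ?mxE ?add0r ?lexx //.
        rewrite (Phi1 _ k) => [|k' hk']; last by rewrite !mxE (negbTE hk') andbF oppr0.
        by rewrite !mxE !eqxx /term hk mulrN1.
      * exists (d1 + d2), (g1 + g2); split.
        - by move=> i h; rewrite mxE; have := s1 i h; have := s2 i h; lra.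
        - by move=> i h; rewrite mxE; have := t1 i h; have := t2 i h; lra.
        - by move=> k; rewrite mulmxDr !mxE e1 e2 !mxE; ring.
        - by apply: le_trans (PhiD _ _) _; exact: lerD.
      * exists (k *: d1), (k *: g1); split.
        - by move=> i h; rewrite mxE; apply: mulr_ge0_le0 => //; apply: s1.
        - by move=> i h; rewrite mxE; apply: mulr_ge0 => //; apply: t1.
        - by move=> k'; rewrite -scalemxAr !mxE e1 !mxE; ring.
        - by rewrite PhiZ //; exact: ler_wpM2l.
    have [d [g [sL sU eg hP]]] := inv _ _ ha.
    pose e := - d.
    have hg k : (Delta R r c *m e) k 0 = g 0 k.
      have := eg k; rewrite hz ?ltn_ord // => h.
      rewrite /e mulmxN mxE; lra.
    have hPneg : Phi g < 0 by apply: le_lt_trans hP hb.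
    have [i _|t1 t10 Ht1] := @small_seq R _ (enum 'I_(c*r))
       (fun i t => i \in M -> `|z i 0 + t * e i 0 - y i 0| <= eps).
      case hM: (i \in M); last by exists 1.
      have hf : `|z i 0 - y i 0| <= eps := hfeas i hM.
      case hLi: (inL i).
        have [|d0 hd0 Hd] := small_mul (e i 0) (s := 2 * eps); first by lra.
        exists d0 => // t ht _; have := Hd t ht.
        have he : 0 <= e i 0 by rewrite /e mxE oppr_ge0 sL.
        rewrite ger0_norm // => h.
        have hyz : y i 0 - z i 0 = eps by move: hLi => /andP [_ /eqP].
        have t0 : 0 <= t * e i 0 by rewrite mulr_ge0 // ltW //; case/andP: ht.
        rewrite ler_norml; apply/andP; split; lra.
      case hUi: (inU i).
        have [|d0 hd0 Hd] := small_mul (e i 0) (s := 2 * eps); first by lra.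
        exists d0 => // t ht _; have := Hd t ht.
        have he : e i 0 <= 0 by rewrite /e mxE oppr_le0 sU.
        rewrite ler0_norm // => h.
        have hyz : y i 0 - z i 0 = - eps by move: hUi => /andP [_ /eqP].
        have t0 : t * e i 0 <= 0 by rewrite mulr_ge0_le0 // ltW //; case/andP: ht.
        rewrite ler_norml; apply/andP; split; lra.
      have hS : inS0 i.
        by case hS0: (inS0 i) => //; have := cover i hM hS0; rewrite hLi hUi.
      have hlt : `|z i 0 - y i 0| < eps.
        rewrite lt_neqAle hf andbT; move: hS; rewrite /inS0 hM /=.
        by rewrite -normrN opprB.
      have [|d0 hd0 Hd] := small_mul (e i 0) (s := eps - `|z i 0 - y i 0|); first by lra.
      exists d0 => // t ht _; have := Hd t ht => h.
      have t0 : 0 <= t by case/andP: ht => /ltW.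
      have := ler_normD (z i 0 - y i 0) (t * e i 0); rewrite normrM (ger0_norm t0).
      have -> : z i 0 + t * e i 0 - y i 0 = z i 0 - y i 0 + t * e i 0 by ring.
      lra.
    have [k _|t2 t20 Ht2] := @small_seq R _ (enum 'I_Nd)
       (fun k t => Dz k 0 != 0 -> `|Dz k 0 + t * g 0 k| = sgk k * (Dz k 0 + t * g 0 k)).
      case hk: (Dz k 0 != 0); last by exists 1.
      have [|d0 hd0 Hd] := small_mul (g 0 k) (s := `|Dz k 0|); first by rewrite normr_gt0.
      exists d0 => // t ht _; apply: sign_stable => //; last exact: Hd.
      by case/andP: ht => /ltW.
    pose t := Num.min t1 t2.
    have ht0 : 0 < t by rewrite lt_min t10 t20.
    have ht1 : 0 < t <= t1 by rewrite ht0 ge_min lexx.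
    have ht2 : 0 < t <= t2 by rewrite ht0 ge_min lexx orbT.
    pose z' := z + t *: e.
    have hz' : feasible M y eps z'.
      by move=> i hM; move: (Ht1 t ht1 i (mem_enum _ _) hM); rewrite /z' /e !mxE.
    have := hopt z' hz'.
    have -> : l1norm (Delta R r c *m z') = l1norm Dz + t * Phi g.
      rewrite /l1norm /Phi mulr_sumr -big_split; apply: eq_bigr => k _.
      have -> : (Delta R r c *m z') k 0 = Dz k 0 + t * g 0 k.
        by rewrite /z' mulmxDr -scalemxAr mxE [X in _ + X]mxE hg.
      rewrite /term.
      case: ifP => hk.
        have -> := Ht2 t ht2 k (mem_enum _ _) hk.
        rewrite (normrEsg (Dz k 0)) /sgk -[RHS]/(_ + _ : R); ring.
      move/negbFE/eqP: hk => ->.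
      by rewrite -[RHS]/(_ + _ : R) normr0 !add0r normrM gtr0_norm.
    have : t * Phi g < 0 by rewrite pmulr_rlt0.
    lra.
- move=> [u [h0 [hs [h1 [hL hU]]]]] z' hz'.
  have E1 : l1norm Dz = \sum_k u k 0 * Dz k 0.
    apply: eq_bigr => k _; case: (eqVneq (Dz k 0) 0) => [->|hk]; first by rewrite normr0 mulr0.
    by rewrite (hs k hk) normrEsg.
  rewrite E1 /Dz dual_sum.
  apply: (le_trans (y := \sum_i ((Delta R r c)^T *m u) i 0 * z' i 0)).
  + apply: ler_sum => i _.
    case hM: (i \in M); last first.
      by rewrite h0 ?mul0r ?lexx // hM.
    case: (eqVneq (`|y i 0 - z i 0|) eps) => hE; last first.
      by rewrite h0 ?mul0r ?lexx // hM hE.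
    have := hz' i hM; rewrite ler_norml => /andP [ha hb].
    move/eqP: hE; rewrite eqr_norml => /andP [/orP [/eqP hE|/eqP hE] _].
      have := hL i hM hE; nra.
    have := hU i hM hE; nra.
  + rewrite -dual_sum; apply: ler_sum => k _.
    apply: le_trans (ler_norm _) _; rewrite normrM; apply: ler_piMl => //.
Qed.
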